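(* Let $\alpha\in(0,1)$, $\gamma,\beta>0$, $r_0>0$, $Y=B(0,r_0)\subset\mathbb R\oplus\mathbb R^{d-1}$, $\mathcal X(x)=\|x\|^\alpha Ax$ with $A=\gamma\,\mathrm{Id}_{\mathbb R}\oplus(-\beta\,\mathrm{Id}_{\mathbb R^{d-1}})$. Let $x\colon[0,T_0]\to Y$ be a trajectory of $\mathcal X$ that leaves $Y$ at time $T_0$, $\theta(t)$ the angle between $x(t)$ and $\mathbb R\times\{0\}$, and $s\in(0,\infty)$ with $\tan\theta(0)>s>\tan\theta(T_0)$; let $T_s$ be the time with $\tan\theta(T_s)=s$. Then $\int_{T_s}^{T_0}\|x\|^\alpha\tan\theta\,dt\le\frac{s}{\gamma+\beta}$. *)

(* Defs.v *)
From HB Require Import structures.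
From mathcomp Require Import all_boot all_order all_algebra.
From mathcomp Require Import all_classical all_reals all_analysis.
Set Implicit Arguments. Unset Strict Implicit. Unset Printing Implicit Defensive.
Import Order.TTheory GRing.Theory Num.Theory.
Import numFieldNormedType.Exports.
Local Open Scope ring_scope.

(* Points of R (+) R^(d-1) with d = n.+1 are row vectors 'rV[R]_(n.+1);
   coordinate ord0 is the R-factor, the other coordinates the R^(d-1) factor. *)

Definition enorm (R : realType) (n : nat) (x : 'rV[R]_n) : R :=
  Num.sqrt (\sum_(i < n) x ord0 i ^+ 2).

Definition Amx (R : realType) (n : nat) (gamma beta : R) : 'M[R]_(n.+1) :=
  \matrix_(i, j) (if i == j then (if i == ord0 then gamma else - beta) else 0).

(* The vector field X(x) = ||x||^alpha A x  (row-vector convention: x *m A^T = x *m A,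
   A symmetric). *)
Definition Xfield (R : realType) (n : nat) (alpha gamma beta : R)
  (x : 'rV[R]_(n.+1)) : 'rV[R]_(n.+1) :=
  (enorm x `^ alpha) *: (x *m Amx n gamma beta).

Definition angle_to_axis (R : realType) (n : nat) (x : 'rV[R]_(n.+1)) : R :=
  acos (`|x ord0 ord0| / enorm x).

(* Main.v *)
Require Import Defs.
From HB Require Import structures.
From mathcomp Require Import all_boot all_order all_algebra.
From mathcomp Require Import all_classical all_reals all_analysis.
From mathcomp Require Import ring lra.
Import Order.TTheory GRing.Theory Num.Theory.
Import numFieldNormedType.Exports.
Local Open Scope classical_set_scope.
Local Open Scope ring_scope.

Lemma coord_derive (R : realType) m (y : R -> 'rV[R]_m) (t : R) (dy : 'rV[R]_m) (i : 'I_m) :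
  is_derive t 1 y dy -> is_derive t 1 (fun s => y s ord0 i) (dy ord0 i).
Proof.
move=> [dv <-]; split; first by move/derivable_mxP: dv; apply.
by rewrite derive_mx // mxE.
Qed.

Lemma Xfield_coord (R : realType) n (alpha gamma beta : R) (z : 'rV[R]_n.+1) i :
  Xfield alpha gamma beta z ord0 i =
  enorm z `^ alpha * (z ord0 i * (if i == ord0 then gamma else - beta)).
Proof.
rewrite /Xfield !mxE (bigD1 i) //= big1 ?addr0; first by rewrite !mxE eqxx.
by move=> j ji; rewrite !mxE (negbTE ji) mulr0.
Qed.

Lemma cvg_sum_fun (R : realType) (T : Type) (F : set_system T) (FF : Filter F) m
  (f : 'I_m -> T -> R) (l : 'I_m -> R) :
  (forall i, f i @ F --> l i) -> (fun t => \sum_(i < m) f i t) @ F --> \sum_(i < m) l i.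
Proof.
move=> fl; rewrite -(fct_sumE).
elim/big_ind2 : _ => //; first exact: cvg_cst.
by move=> g1 a1 g2 a2 h1 h2; apply: cvgD.
Qed.

Section H.
Context {R : realType}.

Lemma wc_comp {U W : topologicalType} (A : set R) (g : R -> U) (h : U -> W) :
  {within A, continuous g} -> (forall t, A t -> {for g t, continuous h}) ->
  {within A, continuous (h \o g)}.
Proof.
move=> /subspace_continuousP gc hc; apply/subspace_continuousP => t At.
exact: continuous_cvg (hc t At) (gc t At).
Qed.

Lemma wc_M (A : set R) (f g : R -> R) :
  {within A, continuous f} -> {within A, continuous g} ->
  {within A, continuous (fun t => f t * g t)}.
Proof.
move=> /subspace_continuousP fc /subspace_continuousP gc.
apply/subspace_continuousP => t At; exact: cvgM (fc t At) (gc t At).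
Qed.

Lemma wc_D (A : set R) (f g : R -> R) :
  {within A, continuous f} -> {within A, continuous g} ->
  {within A, continuous (fun t => f t + g t)}.
Proof.
move=> /subspace_continuousP fc /subspace_continuousP gc.
apply/subspace_continuousP => t At; exact: cvgD (fc t At) (gc t At).
Qed.

Lemma wc_V (A : set R) (f : R -> R) : (forall t, A t -> f t != 0) ->
  {within A, continuous f} -> {within A, continuous (fun t => (f t)^-1)}.
Proof.
move=> f0 /subspace_continuousP fc.
apply/subspace_continuousP => t At; exact: cvgV (f0 t At) (fc t At).
Qed.

Lemma wc_sum (A : set R) m (f : 'I_m -> R -> R) :
  (forall i, {within A, continuous (f i)}) ->
  {within A, continuous (fun t => \sum_(i < m) f i t)}.
Proof.
move=> fc; apply/subspace_continuousP => t At.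
have E : (fun t => \sum_(i < m) f i t) = \sum_(i < m) f i by rewrite fct_sumE.
rewrite E.
have fc' : forall i, f i @ within A (nbhs t) --> f i t.
  by move=> i; move/subspace_continuousP: (fc i); apply.
suff gen : forall r : seq 'I_m, (\sum_(i <- r) f i) @ within A (nbhs t) --> \sum_(i <- r) f i t.
  rewrite /from_subspace; have := gen (index_enum _); rewrite fct_sumE; exact.
elim => [|i r IH]; rewrite ?big_nil ?big_cons; first exact: cvg_cst.
exact: cvgD.
Qed.

Lemma is_derive_ext (f g : R -> R) (t d : R) :
  (forall y, f y = g y) -> is_derive t 1 f d -> is_derive t 1 g d.
Proof. by move=> fg; have -> : f = g by apply/funext. Qed.

Lemma is_derive_val {f : R -> R} {t d d' : R} :
  d = d' -> is_derive t 1 f d -> is_derive t 1 f d'.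
Proof. by move=> ->. Qed.

Lemma is_derive_sq {f : R -> R} {t d : R} :
  is_derive t 1 f d -> is_derive t 1 (fun s => f s ^+ 2) (2 * f t * d).
Proof.
move=> H; have := is_deriveX 2 H; rewrite exprfctE.
by apply: is_derive_val; rewrite /= expr1 mulr_natl mulrC /GRing.scale /= mulrC.
Qed.

Lemma derive_cont {f : R -> R} {y d : R} : is_derive y 1 f d -> {for y, continuous f}.
Proof. by move=> [H _]; exact/differentiable_continuous/derivable1_diffP. Qed.

Lemma is_derive_lin (k t : R) : is_derive t 1 (fun s => k * s) k.
Proof.
have := is_deriveM (is_derive_cst k t 1) (is_derive_id t 1).
apply: is_derive_val; by rewrite /GRing.scale /= mulr1 mulr0 addr0.
Qed.

Lemma mono_cc (f df : R -> R) a b : a <= b ->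
  {within `[a, b], continuous f} ->
  (forall t, a < t < b -> is_derive t 1 f (df t)) ->
  (forall t, a < t < b -> 0 <= df t) ->
  forall t, a <= t <= b -> f a <= f t.
Proof.
move=> ab fc fd fd0 t tab.
apply: (ger0_derive1_le_cc _ _ fc) => //.
- by move=> y; rewrite in_itv /= => /fd [].
- by move=> y; rewrite in_itv /= => yab; rewrite derive1E; have [_ ->] := fd y yab; exact: fd0.
- by rewrite in_itv /= lexx ab.
- by case/andP: tab.
Qed.

Lemma tan_formula (a b : R) : 0 < a -> 0 <= b ->
  tan (acos (a / Num.sqrt (a ^+ 2 + b))) = Num.sqrt (b / a ^+ 2).
Proof.
move=> a0 b0.
have S0 : 0 < a ^+ 2 + b by rewrite ltr_wpDr // exprn_gt0.
set N := Num.sqrt _.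
have N0 : 0 < N by rewrite sqrtr_gt0.
have NN : N ^+ 2 = a ^+ 2 + b by rewrite sqr_sqrtr // ltW.
have aN : a <= N.
  by rewrite -[a](@ger0_norm _ a) ?(ltW a0)// -sqrtr_sqr ler_wsqrtr // lerDl.
set y := a / N.
have y0 : 0 < y by rewrite divr_gt0.
have y1 : y <= 1 by rewrite ler_pdivrMr // mul1r.
have yint : -1 <= y <= 1 by rewrite y1 andbT (le_trans _ (ltW y0)) // lerN10.
rewrite /tan sin_acos // acosK; last by rewrite in_itv /=.
have e : 1 - y ^+ 2 = b / N ^+ 2.
  rewrite /y expr_div_n NN; field; exact: lt0r_neq0.
have e2 : b / a ^+ 2 = (b / N ^+ 2) * (y^-1) ^+ 2.
  rewrite /y; field; apply/andP; split; exact: lt0r_neq0.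
rewrite e e2 [RHS]sqrtrM ?divr_ge0 ?exprn_ge0 ?(ltW N0) // sqrtr_sqr ger0_norm //.
by rewrite invr_ge0 ltW.
Qed.

End H.

Theorem lemma7p4 (R : realType) (n : nat) (alpha gamma beta r0 T0 s Ts : R)
  (x : R -> 'rV[R]_(n.+1)) :
  0 < alpha < 1 -> 0 < gamma -> 0 < beta -> 0 < r0 -> 0 < T0 ->
  (* x is a trajectory of X on [0, T0] *)
  {within `[0, T0], continuous x} ->
  (forall t, 0 < t < T0 -> is_derive t 1 x (Xfield alpha gamma beta (x t))) ->
  (* x stays in Y = B(0, r0) and leaves it at time T0 *)
  (forall t, 0 <= t < T0 -> enorm (x t) < r0) ->
  enorm (x T0) = r0 ->
  0 < s ->
  tan (angle_to_axis (x 0)) > s -> s > tan (angle_to_axis (x T0)) ->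
  0 <= Ts <= T0 -> tan (angle_to_axis (x Ts)) = s ->
  (\int[lebesgue_measure]_(t in `[Ts, T0])
     ((enorm (x t) `^ alpha) * tan (angle_to_axis (x t)))%:E
   <= (s / (gamma + beta))%:E)%E.
Proof.
move=> /andP[a0 a1] g0 b0 r00 T00 xc xd xin xT0 s0 tan0 tanT0 /andP[Ts0 TsT0] tanTs.
pose c := gamma + beta.
have c0 : 0 < c by rewrite addr_gt0.
pose u t := x t ord0 ord0.
pose q t := u t ^+ 2.
pose V t := \sum_(i < n.+1) (if i != ord0 then x t ord0 i ^+ 2 else 0).
pose p t := enorm (x t) `^ alpha.
have V0 t : 0 <= V t by apply: sumr_ge0 => i _; case: ifP => // _; exact: sqr_ge0.
have enormE t : enorm (x t) = Num.sqrt (q t + V t).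
  by rewrite /enorm (bigD1 ord0) //= big_mkcond.
have tanE t : tan (angle_to_axis (x t)) = if u t == 0 then 0 else Num.sqrt (V t / q t).
  rewrite /angle_to_axis enormE -/(u t); case: eqP => [->|/eqP u0].
    by rewrite normr0 mul0r acos0 /tan cos_pihalf invr0 mulr0.
  have nq : `|u t| ^+ 2 = q t by rewrite real_normK ?num_real.
  by rewrite -nq tan_formula ?normr_gt0.
have dx t : 0 < t < T0 -> forall i, is_derive t 1 (fun s => x s ord0 i)
    (p t * (x t ord0 i * (if i == ord0 then gamma else - beta))).
  by move=> tt i; rewrite /p -Xfield_coord; apply: coord_derive; exact: xd.
have dq t : 0 < t < T0 -> is_derive t 1 q (2 * gamma * p t * q t).
  move=> tt; have := is_derive_sq (dx t tt ord0); apply: is_derive_val.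
  by rewrite eqxx /q /u; ring.
have dV t : 0 < t < T0 -> is_derive t 1 V (- (2 * beta * p t * V t)).
  move=> tt.
  have H : is_derive t 1 (\sum_(i < n.+1) (fun s => if i != ord0 then x s ord0 i ^+ 2 else 0))
     (\sum_(i < n.+1) (if i != ord0 then 2 * x t ord0 i * (p t * (x t ord0 i * - beta)) else 0)).
    apply: is_derive_sum => i; case: ifP => i0.
      have := is_derive_sq (dx t tt i); apply: is_derive_val.
      by move/negbTE: i0 => ->.
    exact: is_derive_cst.
  move: H; rewrite fct_sumE; apply: is_derive_val.
  rewrite /V mulr_sumr -sumrN; apply: eq_bigr => i _; case: ifP => _.
    by ring.
  by rewrite mulr0 oppr0.
have xc' (A : set R) : A `<=` `[0, T0] -> forall i, {within A, continuous (fun s => x s ord0 i)}.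
  move=> AS i; apply: (continuous_subspaceW AS).
  apply: (@wc_comp _ _ _ _ _ (fun M : 'rV[R]_n.+1 => M ord0 i) xc) => t _.
  exact: coord_continuous.
have cq (A : set R) : A `<=` `[0, T0] -> {within A, continuous q}.
  move=> AS; have -> : q = fun t => u t * u t by apply/funext => t; rewrite /q expr2.
  by apply: wc_M; exact: xc'.
have cV (A : set R) : A `<=` `[0, T0] -> {within A, continuous V}.
  move=> AS; apply: wc_sum => i; case: (i != ord0).
    have -> : (fun s => x s ord0 i ^+ 2) = fun t => x t ord0 i * x t ord0 i.
      by apply/funext => t; rewrite expr2.
    by apply: wc_M; exact: xc'.
  by apply: continuous_subspaceT; exact: cst_continuous.
have qmono t : 0 <= t <= T0 -> q 0 <= q t.
  apply: (@mono_cc _ q (fun t => 2 * gamma * p t * q t) 0 T0 (ltW T00) (cq _ (@subset_refl _ _))).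
  move=> y _; apply: mulr_ge0; last exact: sqr_ge0.
  apply: mulr_ge0; last exact: powR_ge0.
  by apply: mulr_ge0 => //; exact: ltW.
have u0 : u 0 != 0.
  move: tan0; rewrite tanE; case: eqP => [_ h|/eqP //].
  by move: (lt_trans s0 h); rewrite ltxx.
have Vpos0 : 0 < V 0.
  move: tan0; rewrite tanE (negbTE u0) => h.
  rewrite lt0r V0 andbT; apply/eqP => V00.
  by move: h; rewrite V00 mul0r sqrtr0 => h; move: (lt_trans s0 h); rewrite ltxx.
have qpos t : 0 <= t <= T0 -> 0 < q t.
  move=> tt; apply: (lt_le_trans _ (qmono t tt)).
  by rewrite lt0r sqrf_eq0 u0 sqr_ge0.
have unz t : 0 <= t <= T0 -> u t != 0.
  by move=> tt; have := qpos t tt; rewrite lt0r sqrf_eq0 => /andP[].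
have Vpos t : 0 <= t <= T0 -> 0 < V t.
  pose K := 2 * beta * r0 `^ alpha.
  pose E t := V t * expR (K * t).
  have dexp (y : R) : is_derive y 1 (fun s => expR (K * s)) (expR (K * y) * K).
    exact: (is_derive1_comp (is_derive_expR (K * y)) (is_derive_lin K y)).
  have dE (y : R) : 0 < y < T0 -> is_derive y 1 E
      (V y * (expR (K * y) * K) + expR (K * y) * (- (2 * beta * p y * V y))).
    move=> yy; have := is_deriveM (dV y yy) (dexp y).
    by apply: is_derive_val; rewrite /GRing.scale /=.
  have cE : {within `[0, T0], continuous E}.
    apply: wc_M; first exact: cV.
    by apply: continuous_subspaceT => y; exact: derive_cont (dexp y).
  have Emono := @mono_cc _ E _ 0 T0 (ltW T00) cE dE.
  move=> tt.
  have E0t : E 0 <= E t.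
    apply: Emono => // y yy.
    have py : p y <= r0 `^ alpha.
      rewrite /p; apply: ge0_ler_powR.
      - exact: ltW.
      - by rewrite nnegrE /enorm sqrtr_ge0.
      - by rewrite nnegrE ltW.
      apply: ltW; apply: xin; case/andP: yy => y0 yT; by rewrite (ltW y0) yT.
    have -> : V y * (expR (K * y) * K) + expR (K * y) * - (2 * beta * p y * V y)
       = expR (K * y) * (V y * (2 * beta * (r0 `^ alpha - p y))) by rewrite /K; ring.
    apply: mulr_ge0; first exact: expR_ge0.
    apply: mulr_ge0; first exact: V0.
    by apply: mulr_ge0; [apply: mulr_ge0 => //; exact: ltW | rewrite subr_ge0].
  have E0 : 0 < E 0 by rewrite /E mulr0 expR0 mulr1.
  rewrite lt0r V0 andbT; apply/eqP => Vt0.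
  by move: (lt_le_trans E0 E0t); rewrite /E Vt0 mul0r ltxx.
have TsT0' : Ts < T0.
  rewrite lt_neqAle TsT0 andbT; apply/eqP => e.
  by move: tanT0; rewrite -e tanTs ltxx.
have inA t : Ts <= t <= T0 -> 0 <= t <= T0.
  by case/andP => h1 h2; rewrite h2 (le_trans Ts0 h1).
have sub : `[Ts, T0] `<=` `[0, T0].
  by move=> t /=; rewrite !in_itv /=; exact: inA.
pose w t := Num.sqrt (V t / q t).
pose f t := p t * w t.
pose F t := w t * (- c^-1).
have dw (t : R) : Ts < t < T0 -> is_derive t 1 w (- (c * p t * w t)).
  move=> tt.
  have tt' : 0 < t < T0 by case/andP: tt => h1 h2; rewrite h2 (le_lt_trans Ts0 h1).
  have tt'' : 0 <= t <= T0 by case/andP: tt' => h1 h2; rewrite (ltW h1) (ltW h2).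
  have qt := qpos t tt''.
  have Vt := Vpos t tt''.
  have dg := is_deriveM (dV t tt') (is_deriveV (lt0r_neq0 qt) (dq t tt')).
  have gt : 0 < V t * (q t)^-1 by rewrite divr_gt0.
  have := @is_derive1_comp _ Num.sqrt (fun s => V s * (q s)^-1) t _ _ (is_derive1_sqrt gt) dg.
  apply: is_derive_val.
  rewrite /w /GRing.scale /=.
  set z := Num.sqrt (V t / q t).
  have z0 : 0 < z by rewrite sqrtr_gt0.
  have Vz : V t = z ^+ 2 * q t.
    by rewrite sqr_sqrtr ?ltW // mulrAC -mulrA mulfV ?mulr1 // lt0r_neq0.
  rewrite Vz /c; field.
  by apply/andP; split; exact: lt0r_neq0.
have dF (t : R) : Ts < t < T0 -> is_derive t 1 F (f t).
  move=> tt; have := is_deriveM (dw t tt) (is_derive_cst (- c^-1) t 1).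
  apply: is_derive_val; rewrite /GRing.scale /= /f mulr0 add0r.
  by rewrite /c; field; exact: lt0r_neq0.
have cw : {within `[Ts, T0], continuous w}.
  apply: (@wc_comp _ _ _ _ (fun t => V t * (q t)^-1) Num.sqrt).
    apply: wc_M; first exact: cV.
    apply: wc_V; last exact: cq.
    by move=> t /= tA; apply: lt0r_neq0; apply: qpos; apply: sub.
  by move=> t _; exact: sqrt_continuous.
have cp : {within `[Ts, T0], continuous p}.
  have -> : p = (fun t => Num.sqrt (q t + V t) `^ alpha).
    by apply/funext => t; rewrite /p enormE.
  apply: (@wc_comp _ _ _ _ (fun t => Num.sqrt (q t + V t)) (fun y => y `^ alpha)).
    apply: (@wc_comp _ _ _ _ (fun t => q t + V t) Num.sqrt).
      by apply: wc_D; [exact: cq | exact: cV].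
    by move=> t _; exact: sqrt_continuous.
  move=> t tA.
  have H : 0 < Num.sqrt (q t + V t).
    by rewrite sqrtr_gt0 addr_gt0 //; [apply: qpos | apply: Vpos]; apply: sub.
  exact: (derive_cont (is_derive1_powR alpha H)).
have cf : {within `[Ts, T0], continuous f} by apply: wc_M.
have cF : {within `[Ts, T0], continuous F}.
  by apply: wc_M => //; apply: continuous_subspaceT; exact: cst_continuous.
have dFc : derivable_oo_LRcontinuous F Ts T0.
  have [_ h1 h2] := (continuous_within_itvP _ TsT0').1 cF.
  split => //; move=> t; rewrite in_itv /= => tt.
  by have [] := dF t tt.
have F'f : {in `]Ts, T0[, (F^`())%classic =1 f}.
  move=> t; rewrite in_itv /= => tt; rewrite derive1E.
  by have [_ ->] := dF t tt.
have FTC := continuous_FTC2 TsT0' cf dFc F'f.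
have -> : (\int[lebesgue_measure]_(t in `[Ts, T0])
     ((enorm (x t) `^ alpha) * tan (angle_to_axis (x t)))%:E)%E =
     (\int[lebesgue_measure]_(t in `[Ts, T0]) (f t)%:E)%E.
  apply: eq_integral => t; rewrite inE /= => tA.
  by rewrite /f tanE (negbTE (unz t (sub t tA))).
rewrite FTC -EFinB lee_fin.
have wTs : w Ts = s.
  by rewrite -tanTs tanE (negbTE (unz Ts _)) // Ts0 TsT0.
have wT0 : 0 <= w T0 by exact: sqrtr_ge0.
have ci : 0 < c^-1 by rewrite invr_gt0.
rewrite /F wTs.
have h : 0 <= w T0 * c^-1 by rewrite mulr_ge0 // ltW.
rewrite /c in ci h *; lra.
Qed.
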